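(* Equip $\mathbb{R}^{1,1}$ with the Minkowski inner product $x\cdot y=-x_0y_0+x_1y_1$, let $O$ be the origin, and for $\theta_1,\theta_2\in\mathbb{R}$ let $P_i=(\sinh\theta_i,\cosh\theta_i)$, $i=1,2$, be points on the branch $x_1>0$ of the hyperbola $-x_0^2+x_1^2=1$. Then the vectors $OP_1$ and $OP_2$ are spacelike and the pseudo-angle $\Theta$ between them satisfies $\cosh^2(\Theta)=\cosh^2(\theta_1-\theta_2)$, i.e. $\Theta=|\theta_1-\theta_2|$. Consequently, for any $\theta_0\in\mathbb{R}$ with $\theta_0\neq\theta_1,\theta_2$ and $P_0=(\sinh\theta_0,\cosh\theta_0)$, $\Theta$ is twice the pseudo-angle between the chords $P_0P_1$ and $P_0P_2$, the latter being $\frac{|\theta_1-\theta_2|}{2}$.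
   Context: A vector $x\in\mathbb{R}^{1,1}$ is timelike if $x\cdot x<0$ and spacelike if $x\cdot x>0$. For two vectors $x,y$ that are both timelike or both spacelike, the pseudo-angle $\theta\ge 0$ between them is defined by $\cosh^2(\theta)=\frac{(x\cdot y)^2}{(x\cdot x)(y\cdot y)}$. The pseudo-angle between two chords is the pseudo-angle between their direction vectors. *)

(* Defs.v *)
From Stdlib Require Import Reals Lra.
Open Scope R_scope.

Definition vec := (R * R)%type.

Definition mdot (x y : vec) : R := - fst x * fst y + snd x * snd y.

Definition timelike (x : vec) : Prop := mdot x x < 0.
Definition spacelike (x : vec) : Prop := mdot x x > 0.

Definition vsub (p q : vec) : vec := (fst p - fst q, snd p - snd q).

Definition is_pseudo_angle (x y : vec) (theta : R) : Prop :=
  ((timelike x /\ timelike y) \/ (spacelike x /\ spacelike y)) /\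
  0 <= theta /\
  (cosh theta) ^ 2 = (mdot x y) ^ 2 / (mdot x x * mdot y y).

Definition hpt (t : R) : vec := (sinh t, cosh t).

Definition origin : vec := (0, 0).

(* Main.v *)
Require Import Defs.
From Stdlib Require Import Reals Lra Psatz.
Open Scope R_scope.

Lemma exp2 (p : R) : exp (2*p) = exp p * exp p.
Proof. replace (2*p) with (p+p) by ring. apply exp_plus. Qed.

Lemma expm (p r : R) : exp (p - r) = exp p / exp r.
Proof. unfold Rminus, Rdiv. rewrite exp_plus, exp_Ropp. reflexivity. Qed.

Lemma dot_origin (a b : R) :
  mdot (vsub (hpt a) origin) (vsub (hpt b) origin) = cosh (a - b).
Proof.
  unfold mdot, vsub, hpt, origin; simpl.
  unfold sinh, cosh. rewrite !Rminus_0_r.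
  rewrite (exp_Ropp (a - b)), expm, !exp_Ropp.
  assert (Ha := exp_pos a). assert (Hb := exp_pos b).
  field. lra.
Qed.

Lemma dot_chord (p q r : R) :
  mdot (vsub (hpt (2*p)) (hpt (2*r))) (vsub (hpt (2*q)) (hpt (2*r)))
  = -4 * sinh (p - r) * sinh (q - r) * cosh (p - q).
Proof.
  unfold mdot, vsub, hpt; simpl.
  unfold sinh, cosh.
  rewrite (exp_Ropp (p - r)), (exp_Ropp (q - r)), (exp_Ropp (p - q)), !expm, !exp_Ropp, !exp2.
  assert (Hp := exp_pos p). assert (Hq := exp_pos q). assert (Hr := exp_pos r).
  field. lra.
Qed.

Lemma cosh_ge1 (a : R) : 0 <= a -> 1 <= exp a.
Proof.
  intros H. destruct H as [H|H].
  - rewrite <- exp_0. left. apply exp_increasing. exact H.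
  - subst. rewrite exp_0. lra.
Qed.

Lemma cosh_inj (a b : R) : 0 <= a -> 0 <= b -> cosh a ^ 2 = cosh b ^ 2 -> a = b.
Proof.
  intros Ha Hb H.
  assert (Ea := cosh_ge1 a Ha). assert (Eb := cosh_ge1 b Hb).
  unfold cosh in H. rewrite !exp_Ropp in H.
  set (A := exp a) in *. set (B := exp b) in *.
  assert (HA : A + / A > 0). { assert (0 < /A) by (apply Rinv_0_lt_compat; lra). lra. }
  assert (HB : B + / B > 0). { assert (0 < /B) by (apply Rinv_0_lt_compat; lra). lra. }
  assert (E : A + / A = B + / B) by nra.
  assert (E1 : A*B*(A + /A) = A*B*(B + /B)) by (rewrite E; reflexivity).
  replace (A*B*(A + /A)) with (A*A*B + B) in E1 by (field; lra).
  replace (A*B*(B + /B)) with (B*B*A + A) in E1 by (field; lra).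
  assert (E2 : (A - B) * (A * B - 1) = 0) by nra.
  apply exp_inv. fold A B.
  destruct (Rmult_integral _ _ E2) as [h|h]; nra.
Qed.

Lemma cosh_even (x : R) : cosh (- x) = cosh x.
Proof. unfold cosh. rewrite Ropp_involutive. lra. Qed.

Lemma cosh_abs (x : R) : cosh (Rabs x) = cosh x.
Proof. unfold Rabs. destruct (Rcase_abs x); [apply cosh_even | reflexivity]. Qed.

Lemma pa_char (x y : vec) (d : R) :
  ((timelike x /\ timelike y) \/ (spacelike x /\ spacelike y)) ->
  (mdot x y) ^ 2 / (mdot x x * mdot y y) = cosh d ^ 2 ->
  forall T, is_pseudo_angle x y T <-> T = Rabs d.
Proof.
  intros Hc Hr T. unfold is_pseudo_angle. rewrite Hr. split.
  - intros [_ [HT H]]. apply cosh_inj; [exact HT | apply Rabs_pos |].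
    rewrite cosh_abs. exact H.
  - intros ->. split; [exact Hc|]. split; [apply Rabs_pos|]. rewrite cosh_abs. reflexivity.
Qed.

Lemma dot_chord' (a b c : R) :
  mdot (vsub (hpt a) (hpt c)) (vsub (hpt b) (hpt c))
  = -4 * sinh ((a - c)/2) * sinh ((b - c)/2) * cosh ((a - b)/2).
Proof.
  replace a with (2*(a/2)) at 1 by field.
  replace b with (2*(b/2)) at 1 by field.
  replace c with (2*(c/2)) at 1 2 by field.
  rewrite dot_chord.
  replace ((a-c)/2) with (a/2 - c/2) by field.
  replace ((b-c)/2) with (b/2 - c/2) by field.
  replace ((a-b)/2) with (a/2 - b/2) by field.
  reflexivity.
Qed.

Lemma sinh_nz (x : R) : x <> 0 -> sinh x <> 0.
Proof.
  intros Hx H. unfold sinh in H. apply Hx.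
  assert (exp x = exp (- x)) by lra. apply exp_inv in H0. lra.
Qed.

Lemma chord_facts (a b c : R) : c <> a -> c <> b ->
  (timelike (vsub (hpt a) (hpt c)) /\ timelike (vsub (hpt b) (hpt c))) /\
  (mdot (vsub (hpt a) (hpt c)) (vsub (hpt b) (hpt c))) ^ 2 /
   (mdot (vsub (hpt a) (hpt c)) (vsub (hpt a) (hpt c)) *
    mdot (vsub (hpt b) (hpt c)) (vsub (hpt b) (hpt c))) = cosh ((a - b)/2) ^ 2.
Proof.
  intros Ha Hb. unfold timelike. rewrite !dot_chord'.
  replace ((a - a)/2) with 0 by field. replace ((b - b)/2) with 0 by field.
  rewrite cosh_0.
  assert (Sa : sinh ((a - c)/2) <> 0) by (apply sinh_nz; intro; apply Ha; lra).
  assert (Sb : sinh ((b - c)/2) <> 0) by (apply sinh_nz; intro; apply Hb; lra).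
  assert (0 < sinh ((a - c)/2) ^ 2) by (apply pow_lt_0_compat || nra).
  assert (0 < sinh ((b - c)/2) ^ 2) by (apply pow_lt_0_compat || nra).
  split; [split; nra|].
  field. split; exact Sb || exact Sa.
Qed.

Lemma rabs_half (d : R) : Rabs (d / 2) = Rabs d / 2.
Proof. unfold Rabs. destruct (Rcase_abs (d/2)), (Rcase_abs d); lra. Qed.

Theorem mainTheorem2 (theta1 theta2 : R) :
  let OP1 := vsub (hpt theta1) origin in
  let OP2 := vsub (hpt theta2) origin in
  spacelike OP1 /\ spacelike OP2 /\
  (mdot OP1 OP2) ^ 2 / (mdot OP1 OP1 * mdot OP2 OP2) = (cosh (theta1 - theta2)) ^ 2 /\
  (forall Theta, is_pseudo_angle OP1 OP2 Theta <-> Theta = Rabs (theta1 - theta2)) /\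
  (forall theta0 : R, theta0 <> theta1 -> theta0 <> theta2 ->
     forall Theta phi,
       is_pseudo_angle OP1 OP2 Theta ->
       is_pseudo_angle (vsub (hpt theta1) (hpt theta0))
                       (vsub (hpt theta2) (hpt theta0)) phi ->
       Theta = 2 * phi /\ phi = Rabs (theta1 - theta2) / 2) /\
  (forall theta0 : R, theta0 <> theta1 -> theta0 <> theta2 ->
     is_pseudo_angle (vsub (hpt theta1) (hpt theta0))
                     (vsub (hpt theta2) (hpt theta0)) (Rabs (theta1 - theta2) / 2)).
Proof.
  intros OP1 OP2.
  assert (S1 : spacelike OP1).
  { unfold spacelike, OP1. rewrite dot_origin, Rminus_diag, cosh_0. lra. }
  assert (S2 : spacelike OP2).
  { unfold spacelike, OP2. rewrite dot_origin, Rminus_diag, cosh_0. lra. }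
  assert (R1 : (mdot OP1 OP2) ^ 2 / (mdot OP1 OP1 * mdot OP2 OP2) = (cosh (theta1 - theta2)) ^ 2).
  { unfold OP1, OP2. rewrite !dot_origin, !Rminus_diag, cosh_0. field. }
  assert (P1 := pa_char OP1 OP2 _ (or_intror (conj S1 S2)) R1).
  split; [exact S1|]. split; [exact S2|]. split; [exact R1|]. split; [exact P1|].
  split.
  - intros t0 H1 H2 Theta phi HT Hp.
    destruct (chord_facts _ _ _ H1 H2) as [Hc Hr].
    apply (pa_char _ _ _ (or_introl Hc) Hr) in Hp.
    apply P1 in HT. rewrite rabs_half in Hp.
    replace ((theta1 - theta2)/2) with ((theta1 - theta2)/2) in Hp by reflexivity.
    split; lra.
  - intros t0 H1 H2.
    destruct (chord_facts _ _ _ H1 H2) as [Hc Hr].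
    apply (pa_char _ _ _ (or_introl Hc) Hr). symmetry. apply rabs_half.
Qed.
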